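(* Assume conditions (A1)–(A5) below. Then for almost every $\omega\in\Omega$ there exists a constant $\hat\rho(\omega)>0$ such that the map $\theta\mapsto\max_{W\in\mathcal W}F(W,H(\theta,\omega))$ is $\hat\rho(\omega)$-weakly convex on $\Theta$.
   Context: Let $(\Xi,\mathscr F,P)$ be a complete probability space and $\omega:\Xi\to\Omega$ a random element; $\mathcal Z_p$ is the space of measurable real functions of $\omega$ with finite $p$-th absolute moment. Let $S,M_U$ be positive integers, $\Theta\subset\mathbb R^S$, $\mathcal W\subset\mathbb C^{M_U}$, $F:\mathbb C^{M_U}\times\mathbb C^{M_U}\to\mathbb R$, $H:\mathcal U\times\Omega\to\mathbb C^{M_U}$ with $\mathcal U\supset\Theta$ open. A function $g$ is $\rho$-weakly convex (resp. concave) on a set if $g+\frac\rho2\|\cdot\|^2$ (resp. $-g+\frac\rho2\|\cdot\|^2$) is convex there. Conditions: (A1) $F$ is twice continuously real-differentiable; (A2) $\Theta,\mathcal W$ compact, $\Theta$ convex; (A3) there are constants $B_H,L_{H,0},L_{H,1}$ such that for a.e. $\omega$, $H(\cdot,\omega)$ is bounded by $B_H$ on $\Theta$, twice continuously differentiable on $\mathcal U$, $L_{H,0}$-Lipschitz with $L_{H,1}$-Lipschitz gradient on $\Theta$; (A4) there is a positive $\tilde\rho\in\mathcal Z_1$ such that for a.e. $\omega$, $\theta\mapsto\max_{W\in\mathcal W}F(W,H(\theta,\omega))$ is $\tilde\rho(\omega)$-weakly concave on $\Theta$; (A5) for all $\theta\in\Theta$ and any maximizer $W^*(\theta,\omega)\in\arg\max_{W\in\mathcal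 W}F(W,H(\theta,\omega))$, $\omega\mapsto F(W^*(\theta,\omega),H(\theta,\omega))$ is in $\mathcal Z_2$ and bounded below, and i.i.d. samples of $\omega$ can be drawn. *)

(* Defs.v *)
From HB Require Import structures.
From mathcomp Require Import all_boot all_order all_algebra.
From mathcomp Require Import all_classical all_reals all_analysis.
Set Implicit Arguments. Unset Strict Implicit. Unset Printing Implicit Defensive.
Import Order.TTheory GRing.Theory Num.Theory.
Import numFieldNormedType.Exports.
Local Open Scope classical_set_scope.
Local Open Scope ring_scope.

(* C^M, encoded through its real realification: z = (Re z, Im z). *)
Definition Cvec (R : realType) (M : nat) : Type := ('rV[R]_M * 'rV[R]_M)%type.

Definition sqnorm (R : realType) (S : nat) (x : 'rV[R]_S) : R :=
  \sum_(i < S) (x ord0 i) ^+ 2.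

Definition convex_set_on (R : realType) (S : nat) (X : set 'rV[R]_S) : Prop :=
  forall x y t, X x -> X y -> 0 <= t <= 1 -> X (t *: x + (1 - t) *: y).

Definition convex_fun_on (R : realType) (S : nat) (X : set 'rV[R]_S)
  (g : 'rV[R]_S -> R) : Prop :=
  forall x y t, X x -> X y -> 0 <= t <= 1 ->
    g (t *: x + (1 - t) *: y) <= t * g x + (1 - t) * g y.

Definition weakly_convex_on (R : realType) (S : nat) (X : set 'rV[R]_S)
  (rho : R) (g : 'rV[R]_S -> R) : Prop :=
  convex_fun_on X (fun x => g x + rho / 2 * sqnorm x).

Definition weakly_concave_on (R : realType) (S : nat) (X : set 'rV[R]_S)
  (rho : R) (g : 'rV[R]_S -> R) : Prop :=
  convex_fun_on X (fun x => - g x + rho / 2 * sqnorm x).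

Definition C1_on (R : realType) (V W : normedModType R) (U : set V) (f : V -> W)
  : Prop :=
  (forall x, U x -> differentiable f x) /\
  (forall v x, U x -> {for x, continuous (fun y => 'D_v f y)}).

Definition C2_on (R : realType) (V W : normedModType R) (U : set V) (f : V -> W)
  : Prop :=
  C1_on U f /\ (forall v, C1_on U (fun x => 'D_v f x)).

(* value function  h |-> max_{W in Wset} F(W, h)  (written as a supremum,
   which is the maximum whenever the maximum exists) *)
Definition maxF (R : realType) (M : nat) (F : Cvec R M -> Cvec R M -> R)
  (Wset : set (Cvec R M)) (h : Cvec R M) : R :=
  sup [set F W h | W in Wset].

Definition Zmoment (R : realType) (dX : measure_display) (Xi : measurableType dX)
  (P : probability Xi R) (d : measure_display) (Omega : measurableType d)
  (omega : Xi -> Omega) (p : R) (f : Omega -> R) : Prop :=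
  measurable_fun setT f /\
  (\int[P]_xi ((`|f (omega xi)| `^ p)%:E) < +oo)%E.
Arguments Zmoment {R dX Xi} P {d Omega} omega p f.

(* Main.v *)
Require Import Defs.
From HB Require Import structures.
From mathcomp Require Import all_boot all_order all_algebra.
From mathcomp Require Import all_classical all_reals all_analysis.
Import Order.TTheory GRing.Theory Num.Theory.
Import numFieldNormedType.Exports.
Local Open Scope classical_set_scope.
Local Open Scope ring_scope.
From mathcomp Require Import lra ring.

Section Frames.
Variable R : realType.

Definition frame {V : normedModType R} {I : finType} (e : I -> V) (c : I -> V -> R) :=
  (forall w, w = \sum_i c i w *: e i) /\ (forall i w, `|c i w| <= `|w|).

Definition has_frame (V : normedModType R) :=
  exists (I : finType) (e : I -> V) (c : I -> V -> R), frame e c.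

Lemma has_frame_rV n : has_frame 'rV[R]_n.
Proof.
exists (ordinal n); exists (fun j => delta_mx 0 j); exists (fun j (w : 'rV[R]_n) => w 0 j).
split.
- move=> w; apply/rowP => j; rewrite summxE.
  rewrite (bigD1 j) //= big1 ?addr0.
    by rewrite !mxE !eqxx /= mulr1.
  by move=> k kj; rewrite !mxE eqxx eq_sym (negbTE kj) /= mulr0.
- move=> j w; have -> : `|w| = mx_norm w by [].
  rewrite mx_normrE.
  exact: (le_bigmax _ _ (0, j)).
Qed.

Lemma has_frame_prod (V1 V2 : normedModType R) :
  has_frame V1 -> has_frame V2 -> has_frame (V1 * V2)%type.
Proof.
move=> [I1 [e1 [c1 [d1 b1]]]] [I2 [e2 [c2 [d2 b2]]]].
exists (I1 + I2)%type.
exists (fun i => match i with inl i => (e1 i, 0) | inr j => (0, e2 j) end).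
exists (fun i w => match i with inl i => c1 i w.1 | inr j => c2 j w.2 end).
split.
- case=> w1 w2; rewrite big_sumType /=.
  have E1 : \sum_i c1 i w1 *: ((e1 i, 0) : (V1 * V2)%type) = (\sum_i c1 i w1 *: e1 i, 0).
    elim/big_rec2: _ => // i a b _ ->.
    by congr (_, _); rewrite /= ?scaler0 ?addr0.
  have E2 : \sum_i c2 i w2 *: ((0, e2 i) : (V1 * V2)%type) = (0, \sum_i c2 i w2 *: e2 i).
    elim/big_rec2: _ => // i a b _ ->.
    by congr (_, _); rewrite /= ?scaler0 ?addr0 ?add0r.
  rewrite E1 E2 -(d1 w1) -(d2 w2).
  by congr (_, _); rewrite /= ?addr0 ?add0r.
- move=> [i|j] [w1 w2] /=; rewrite prod_normE /=.
  + by rewrite le_max b1.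
  + by rewrite le_max b2 orbT.
Qed.
End Frames.
Arguments frame {R V I} e c. Arguments has_frame {R} V.

Section G.
Variable R : realType.

Lemma derive_frame {V W : normedModType R} {I : finType} (e : I -> V) c
  (f : V -> W) q w : frame e c -> differentiable f q ->
  'D_w f q = \sum_i c i w *: 'D_(e i) f q.
Proof.
move=> [d _] df; rewrite deriveE // {1}(d w) linear_sum.
by apply: eq_bigr => i _; rewrite linearZ deriveE.
Qed.

Lemma compact_ub {T : topologicalType} (K : set T) (g : T -> R) :
  compact K -> (forall q, K q -> {for q, continuous g}) ->
  exists M, 0 <= M /\ forall q, K q -> g q <= M.
Proof.
move=> cK cg.
have [[q0 Kq0]|K0] := pselect (exists q, K q); last first.
  by exists 0; split=> [//|q Kq]; exfalso; apply: K0; exists q.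
have [c cK' gc] : exists2 c, c \in K & forall t, t \in K -> g t <= g c.
  apply: compact_EVT_max => //; first by exists q0.
  apply: continuous_in_subspaceT => q; rewrite inE; exact: cg.
exists (Num.max (g c) 0); split; first by rewrite le_max lexx orbT.
move=> q Kq; rewrite le_max gc ?inE //.
Qed.

Lemma cont_sum {T : topologicalType} {I : finType} (g : I -> T -> R) q :
  (forall i, {for q, continuous (g i)}) ->
  {for q, continuous (fun x => \sum_i g i x)}.
Proof.
move=> cg.
suff H : forall r, {for q, continuous (fun x => \sum_(i <- r) g i x)} by exact: H.
elim=> [|i r IH].
  have -> : (fun x => \sum_(i <- [::]) g i x) = cst 0.
    by apply/funext => x; rewrite big_nil.
  exact: cst_continuous.
have -> : (fun x => \sum_(j <- i :: r) g j x) = (fun x => g i x + \sum_(j <- r) g j x).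
  by apply/funext => x; rewrite big_cons.
rewrite /continuous_at /=.
apply: cvgD; [exact: cg | exact: IH].
Qed.

Lemma deriv_bound {V W : normedModType R} {I : finType} (e : I -> V) c
  (K : set V) (f : V -> W) : frame e c -> compact K ->
  (forall q, K q -> differentiable f q) ->
  (forall i q, K q -> {for q, continuous ('D_(e i) f)}) ->
  exists C, 0 <= C /\ forall q w, K q -> `|'D_w f q| <= C * `|w|.
Proof.
move=> fr cK df cd.
have cg : forall q, K q -> {for q, continuous (fun q => \sum_i `|'D_(e i) f q|)}.
  move=> q Kq; apply: cont_sum => i.
  exact: (continuous_comp (cd i q Kq) (@norm_continuous _ _ _)).
have [M [M0 HM]] := @compact_ub _ K _ cK cg.
exists M; split => // q w Kq.
rewrite (derive_frame _ _ _ _ _ fr (df q Kq)).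
apply: (le_trans (ler_norm_sum _ _ _)).
apply: (@le_trans _ _ (\sum_i `|w| * `|'D_(e i) f q|)).
  apply: ler_sum => i _; rewrite normrZ ler_wpM2r //; exact: fr.2.
by rewrite -mulr_sumr mulrC ler_wpM2r // HM.
Qed.

Lemma derive_comp1 {V W : normedModType R} (f : V -> W) (k : R -> V) s :
  differentiable k s -> differentiable f (k s) ->
  'D_1 (f \o k) s = 'D_('D_1 k s) f (k s).
Proof.
move=> dk df; rewrite deriveE; last exact: differentiable_comp.
by rewrite diff_comp //= -!deriveE.
Qed.
End G.
Arguments derive_frame {R V W I}. Arguments compact_ub {R T}. Arguments cont_sum {R T I}. Arguments deriv_bound {R V W I}. Arguments derive_comp1 {R V W}.

Section G3.
Variable R : realType.

Lemma derive_lincomb {V W : normedModType R} {I : finType} (a : I -> R)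
  (g : I -> V -> W) x v : (forall i, derivable (g i) x v) ->
  'D_v (fun q => \sum_i a i *: g i q) x = \sum_i a i *: 'D_v (g i) x.
Proof.
move=> dg.
suff H : forall r, derivable (fun q => \sum_(i <- r) a i *: g i q) x v /\
  'D_v (fun q => \sum_(i <- r) a i *: g i q) x = \sum_(i <- r) a i *: 'D_v (g i) x.
  exact: (H _).2.
elim=> [|i r [IH1 IH2]].
  have -> : (fun q => \sum_(i <- [::]) a i *: g i q) = cst 0.
    by apply/funext => q; rewrite big_nil.
  by rewrite derive_cst big_nil; split => //; exact: derivable_cst.
have -> : (fun q => \sum_(j <- i :: r) a j *: g j q) =
    (a i \*: g i) + (fun q => \sum_(j <- r) a j *: g j q).
  by apply/funext => q; rewrite big_cons.
split; first by apply: derivableD => //; exact: derivableZ.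
rewrite deriveD //; last exact: derivableZ.
by rewrite deriveZ // IH2 big_cons.
Qed.

Lemma deriv2_bound {V W : normedModType R} {I : finType} (e : I -> V) c
  (K : set V) (f : V -> W) : frame e c -> compact K ->
  (forall q, differentiable f q) ->
  (forall v q, differentiable ('D_v f) q) ->
  (forall i j q, K q -> {for q, continuous ('D_(e j) ('D_(e i) f))}) ->
  exists C, 0 <= C /\ forall q u w, K q -> `|'D_u ('D_w f) q| <= C * `|u| * `|w|.
Proof.
move=> fr cK df ddf cdd.
have hC : forall i, exists C, 0 <= C /\ forall q u, K q ->
    `|'D_u ('D_(e i) f) q| <= C * `|u|.
  move=> i; apply: (deriv_bound e c K ('D_(e i) f) fr cK) => q Kq; [exact: ddf | exact: cdd].
have [Cf HC] := choice hC.
exists (\sum_i Cf i); split; first by apply: sumr_ge0 => i _; exact: (HC i).1.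
move=> q u w Kq.
have -> : 'D_w f = (fun q => \sum_i c i w *: 'D_(e i) f q).
  by apply/funext => p; exact: derive_frame _ _ _ _ _ fr (df p).
rewrite derive_lincomb; last by move=> i; apply: diff_derivable; exact: ddf.
apply: (le_trans (ler_norm_sum _ _ _)).
rewrite mulr_suml mulr_suml; apply: ler_sum => i _.
rewrite normrZ mulrC.
apply: ler_pM; [exact: normr_ge0 | exact: normr_ge0 | exact: (HC i).2 | exact: fr.2].
Qed.
End G3.
Arguments derive_lincomb {R V W I}. Arguments deriv2_bound {R V W I}.

Section G4.
Variable R : realType.

Lemma conv1d (psi : R -> R) (M : R) : 0 <= M ->
  (forall s : R, 0 <= s <= 1 -> differentiable psi s) ->
  (forall a b : R, 0 < a -> a < b -> b < 1 -> 'D_1 psi a - 'D_1 psi b <= M * (b - a)) ->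
  forall t : R, 0 <= t <= 1 -> psi t <= t * psi 1 + (1 - t) * psi 0 + M * (t * (1 - t)).
Proof.
move=> M0 dpsi hd t /andP[t0 t1].
have [->|tn0] := eqVneq t 0.
  lra.
have [->|tn1] := eqVneq t 1.
  lra.
have t0' : 0 < t by rewrite lt_neqAle eq_sym tn0 t0.
have t1' : t < 1 by rewrite lt_neqAle tn1 t1.
have der : forall a b : R, 0 <= a -> b <= 1 -> forall x : R, x \in `]a, b[%R ->
    is_derive x 1 psi ('D_1 psi x).
  move=> a b a0 b1 x; rewrite in_itv /= => /andP[ax xb].
  apply: derivableP; apply: diff_derivable; apply: dpsi.
  apply/andP; split; [lra | lra].
have cont : forall a b : R, 0 <= a -> b <= 1 -> {within `[a, b], continuous psi}.
  move=> a b a0 b1; apply: continuous_in_subspaceT => x.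
  rewrite inE /= in_itv /= => /andP[ax xb].
  apply: differentiable_continuous; apply: dpsi; apply/andP; split; [lra|lra].
have [c1 c1in E1] := MVT t0' (der 0 t (lexx _) t1) (cont 0 t (lexx _) t1).
have [c2 c2in E2] := MVT t1' (der t 1 t0 (lexx _)) (cont t 1 t0 (lexx _)).
move: c1in c2in; rewrite !in_itv /= => /andP[c10 c1t] /andP[c2t c21].
have hc := hd c1 c2 c10 (lt_trans c1t c2t) c21.
set A := 'D_1 psi c2 in E2 hc; set B := 'D_1 psi c1 in E1 hc.
have H1 : B - A <= M by apply: (le_trans hc); rewrite ler_piMr //; lra.
have H2 : 0 <= t * (1 - t) * (A - B + M).
  by apply: mulr_ge0; [apply: mulr_ge0; lra | lra].
have -> : psi 1 = psi t + A * (1 - t) by lra.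
have -> : psi 0 = psi t - B * t by rewrite subr0 in E1; lra.
nra.
Qed.

Lemma derive_pair1 {W1 W2 : normedModType R} (f : R -> W1) (g : R -> W2) s :
  differentiable f s -> differentiable g s ->
  'D_1 (fun r => (f r, g r)) s = ('D_1 f s, 'D_1 g s).
Proof.
move=> df dg; rewrite deriveE; last exact: differentiable_pair.
by rewrite diff_pair // -!deriveE.
Qed.

Lemma derive_line {S : nat} {W : normedModType R} (g : 'rV[R]_S -> W) (x y : 'rV[R]_S) (s : R) :
  'D_1 (fun r : R => g (r *: x + (1 - r) *: y)) s = 'D_(x - y) g (s *: x + (1 - s) *: y).
Proof.
rewrite /derive; congr lim.
have E : forall h : R, ((fun r : R => g (r *: x + (1 - r) *: y)) \o shift s) h%:A =
  (g \o shift (s *: x + (1 - s) *: y)) (h *: (x - y)).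
  move=> h /=; congr g.
  by apply/rowP => i; rewrite !mxE /= [h%:A]mulr1; ring.
f_equal; apply/funext => h; by rewrite E.
Qed.

Lemma differentiable_line {S : nat} (x y : 'rV[R]_S) s :
  differentiable (fun r : R => r *: x + (1 - r) *: y) s.
Proof.
apply: differentiableD.
  by apply: (differentiableZl (k := id)).
have -> : (fun r : R => (1 - r) *: y) = (fun r : R => r *: (- y)) + cst y.
  by apply/funext => r /=; apply/rowP => i; rewrite !mxE; ring.
apply: differentiableD => //.
Qed.

Lemma derive_sub {V W : normedModType R} (f : V -> W) (p u w : V) :
  differentiable f p -> 'D_u f p - 'D_w f p = 'D_(u - w) f p.
Proof. by move=> df; rewrite !deriveE // linearB. Qed.

Lemma pair_sub0 {A B : zmodType} (a b : B) : ((0 : A, a) - (0, b)) = (0, a - b).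
Proof. by congr pair; rewrite /= subrr. Qed.

Lemma line_diff {S : nat} (x y : 'rV[R]_S) (a b : R) :
  (a *: x + (1 - a) *: y) - (b *: x + (1 - b) *: y) = (a - b) *: (x - y).
Proof. by apply/rowP => i; rewrite !mxE; ring. Qed.

Lemma normZ_ab {V : normedModType R} (v : V) (a b : R) : a <= b ->
  `|(a - b) *: v| = (b - a) * `|v|.
Proof. by move=> ab; rewrite normrZ distrC ger0_norm // subr_ge0. Qed.

Lemma mvt01 (G : R -> R) (a b : R) : a < b ->
  (forall r : R, a <= r <= b -> differentiable G r) ->
  exists2 c, a < c < b & G b - G a = 'D_1 G c * (b - a).
Proof.
move=> ab dG.
have der : forall x : R, x \in `]a, b[%R -> is_derive x 1 G ('D_1 G x).
  move=> x; rewrite in_itv /= => /andP[ax xb].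
  apply: derivableP; apply: diff_derivable; apply: dG.
  apply/andP; split; [lra | lra].
have cont : {within `[a, b], continuous G}.
  apply: continuous_in_subspaceT => x.
  rewrite inE /= in_itv /= => /andP[ax xb].
  apply: differentiable_continuous; apply: dG; apply/andP; split; [lra|lra].
have [c cin E] := MVT ab der cont.
by exists c => //; move: cin; rewrite in_itv.
Qed.

Lemma fin_ineq (X Ga Gb T D ba m1 m2 : R) : X - Ga = T -> Gb - Ga = D * ba ->
  0 <= ba -> `|D| <= m1 -> `|T| <= m2 -> X - Gb <= m1 * ba + m2.
Proof.
move=> e1 e2 ba0 h1 h2.
have h3 : - (D * ba) <= m1 * ba.
  rewrite -mulNr; apply: ler_wpM2r => //; apply: le_trans h1.
  by rewrite -normrN ler_norm.
have h4 : T <= m2 by apply: le_trans h2; exact: ler_norm.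
lra.
Qed.

Lemma sq_conv {S : nat} (x y : 'rV[R]_S) (t : R) :
  t * sqnorm x + (1 - t) * sqnorm y - sqnorm (t *: x + (1 - t) *: y) =
  t * (1 - t) * sqnorm (x - y).
Proof.
rewrite /sqnorm !mulr_sumr -big_split -sumrB /=.
by apply: eq_bigr => i _; rewrite !mxE; ring.
Qed.

Lemma norm_sq_le {S : nat} (z : 'rV[R]_S) : `|z| ^+ 2 <= sqnorm z.
Proof.
have [z0|zn0] := eqVneq `|z| 0.
  by rewrite z0 expr0n /=; apply: sumr_ge0 => i _; exact: sqr_ge0.
have zn0' : mx_norm z != 0 by [].
have -> : `|z| = mx_norm z by [].
have [[i j] ->] := mx_norm_neq0 zn0'.
rewrite /sqnorm (bigD1 j) //= ord1 real_normK ?num_real //.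
by rewrite lerDl; apply: sumr_ge0 => k _; exact: sqr_ge0.
Qed.

Lemma final_comb (mz mx my sz sx sy sxy n Lc t : R) : 0 <= t <= 1 ->
  mz <= t * mx + (1 - t) * my + (Lc * n) * (t * (1 - t)) ->
  t * sx + (1 - t) * sy - sz = t * (1 - t) * sxy -> 0 <= n -> n <= sxy -> 0 <= Lc ->
  mz + (2 * Lc + 1) / 2 * sz <= t * (mx + (2 * Lc + 1) / 2 * sx) + (1 - t) * (my + (2 * Lc + 1) / 2 * sy).
Proof.
move=> /andP[t0 t1] hm hs n0 nsxy Lc0.
have k1 : 0 <= t * (1 - t) by apply: mulr_ge0; lra.
have k2 : 0 <= (2 * Lc + 1) / 2 * sxy - Lc * n.
  have -> : (2 * Lc + 1) / 2 * sxy - Lc * n = Lc * (sxy - n) + sxy / 2 by field.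
  apply: addr_ge0; first by apply: mulr_ge0; lra.
  apply: divr_ge0; lra.
have k3 := mulr_ge0 k1 k2.
have e : (2 * Lc + 1) / 2 * (t * sx + (1 - t) * sy - sz) = (2 * Lc + 1) / 2 * (t * (1 - t) * sxy) by rewrite hs.
nra.
Qed.

Lemma sup_comb {T : Type} (A : set T) (fz fx fy : T -> R) (t c : R) :
  0 <= t <= 1 -> 0 <= c ->
  has_ubound [set fx W | W in A] -> has_ubound [set fy W | W in A] ->
  (forall W, A W -> fz W <= t * fx W + (1 - t) * fy W + c) ->
  sup [set fz W | W in A] <= t * sup [set fx W | W in A] + (1 - t) * sup [set fy W | W in A] + c.
Proof.
move=> /andP[t0 t1] c0 ubx uby H.
have [[W0 AW0]|A0] := pselect (exists W, A W); last first.
  have E : forall f : T -> R, [set f W | W in A] = set0.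
    move=> f; apply/seteqP; split => y; last by [].
    by move=> [W AW _]; exfalso; apply: A0; exists W.
  by rewrite !E sup0 !mulr0 !add0r.
apply: ge_sup; first by exists (fz W0), W0.
move=> _ [W AW <-].
apply: (le_trans (H W AW)).
rewrite lerD2r; apply: lerD.
  apply: ler_wpM2l => //; apply: ub_le_sup => //; by exists W.
apply: ler_wpM2l; first lra.
by apply: ub_le_sup => //; exists W.
Qed.
End G4.
Arguments conv1d {R}. Arguments derive_pair1 {R W1 W2}. Arguments derive_line {R S W}. Arguments differentiable_line {R S}.
Arguments derive_sub {R V W}. Arguments pair_sub0 {A B}.
Arguments line_diff {R S}. Arguments normZ_ab {R V}. Arguments mvt01 {R}. Arguments fin_ineq {R}.
Arguments sq_conv {R S}. Arguments norm_sq_le {R S}. Arguments final_comb {R}. Arguments sup_comb {R T}.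


Lemma key_gen (R : realType) (V1 V2 : normedModType R) (S : nat)
  (Theta : set 'rV[R]_S) (Fp : (V1 * V2)%type -> R) (h : 'rV[R]_S -> V2)
  (K : set (V1 * V2)%type) (C1 C2 CH L1 : R) (W : V1) :
  (forall p, differentiable Fp p) -> (forall v p, differentiable ('D_v Fp) p) ->
  (forall q, Theta q -> differentiable h q) -> convex_set_on Theta ->
  0 <= C1 -> 0 <= C2 -> 0 <= CH ->
  (forall q w, K q -> `|'D_w Fp q| <= C1 * `|w|) ->
  (forall q u w, K q -> `|'D_u ('D_w Fp) q| <= C2 * `|u| * `|w|) ->
  (forall q w, Theta q -> `|'D_w h q| <= CH * `|w|) ->
  (forall th1 th2 v, Theta th1 -> Theta th2 ->
     `|'D_v h th1 - 'D_v h th2| <= L1 * `|th1 - th2| * `|v|) ->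
  (forall th, Theta th -> K (W, h th)) ->
  forall x y t, Theta x -> Theta y -> 0 <= t <= 1 ->
    Fp (W, h (t *: x + (1 - t) *: y)) <=
    t * Fp (W, h x) + (1 - t) * Fp (W, h y) +
    ((C2 * CH ^+ 2 + C1 * `|L1|) * `|x - y| ^+ 2) * (t * (1 - t)).
Proof.
move=> dF' ddF dH cvx C10 C20 CH0 HC1 HC2 HCH HL KW.
pose Lc := C2 * CH ^+ 2 + C1 * `|L1|.
have Lc0 : 0 <= Lc.
  by apply: addr_ge0; apply: mulr_ge0 => //; apply: exprn_ge0.
have pairn : forall z : V2, `|((0, z) : (V1 * V2)%type)| = `|z|.
  by move=> z; rewrite prod_normE /= normr0; apply: max_r.
move=> x y t Tx Ty t01.
pose g := fun r : R => r *: x + (1 - r) *: y.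
have Tg : forall r : R, 0 <= r <= 1 -> Theta (g r) := fun r hr => cvx x y r Tx Ty hr.
pose P := fun r : R => ((W, h (g r)) : (V1 * V2)%type).
pose psi := fun r => Fp (P r).
have dk : forall r : R, 0 <= r <= 1 -> differentiable (h \o g) r.
  move=> r hr; apply: differentiable_comp; first exact: differentiable_line.
  have := dH _ (Tg r hr); exact.
have dP : forall r : R, 0 <= r <= 1 -> differentiable P r.
  move=> r hr; apply: differentiable_pair; [exact: differentiable_cst | exact: dk].
have DP : forall r : R, 0 <= r <= 1 -> 'D_1 P r = (0, 'D_(x - y) h (g r)).
  move=> r hr.
  have E := derive_pair1 (cst W) (h \o g) r (differentiable_cst _ _) (dk r hr).
  rewrite derive_cst (derive_line h x y r) in E.
  exact: E.
have Dpsi : forall r : R, 0 <= r <= 1 ->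
    'D_1 psi r = 'D_((0, 'D_(x - y) h (g r)) : (V1 * V2)%type) Fp (P r).
  move=> r hr; rewrite -(DP r hr).
  exact: (derive_comp1 Fp P r (dP r hr) (dF' _)).
have PK : forall r : R, 0 <= r <= 1 -> K (P r).
  by move=> r hr; exact: KW _ (Tg r hr).
have dpsi : forall r : R, 0 <= r <= 1 -> differentiable psi r.
  by move=> r hr; apply: differentiable_comp; [exact: dP | exact: dF'].
have M0 : 0 <= Lc * `|x - y| ^+ 2 by apply: mulr_ge0 => //; apply: exprn_ge0.
have hd : forall a b : R, 0 < a -> a < b -> b < 1 ->
    'D_1 psi a - 'D_1 psi b <= (Lc * `|x - y| ^+ 2) * (b - a).
  move=> a b a0 ab b1.
  have rs : forall r : R, a <= r <= b -> 0 <= r <= 1.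
    by move=> r /andP[ar rb]; apply/andP; split; lra.
  have ha : 0 <= a <= 1 by apply/andP; split; lra.
  have hb : 0 <= b <= 1 by apply/andP; split; lra.
  rewrite (Dpsi a ha) (Dpsi b hb).
  pose ka := 'D_(x - y) h (g a).
  pose kb := 'D_(x - y) h (g b).
  pose wb : (V1 * V2)%type := (0, kb).
  pose G := fun r : R => 'D_wb Fp (P r).
  have lin := derive_sub Fp (P a) (0, ka) wb (dF' _).
  rewrite /wb pair_sub0 in lin.
  have [c /andP[ac cb] Ec] := mvt01 G a b ab
    (fun r hr => differentiable_comp (dP r (rs r hr)) (ddF wb _)).
  have hc : 0 <= c <= 1 by apply/andP; split; [apply: le_trans (ltW a0) (ltW ac) | apply: le_trans (ltW cb) (ltW b1)].
  have DG : 'D_1 G c = 'D_((0, 'D_(x - y) h (g c)) : (V1 * V2)%type)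
      ('D_wb Fp) (P c).
    rewrite -(DP c hc).
    exact: (derive_comp1 ('D_wb Fp) P c (dP c hc) (ddF _ _)).
  pose kc := 'D_(x - y) h (g c).
  have B1a := HC2 (P c) ((0, kc) : (V1 * V2)%type) wb (PK c hc).
  rewrite (pairn kc) (pairn kb) in B1a.
  have hkc : `|kc| <= CH * `|x - y| := HCH _ _ (Tg c hc).
  have hkb : `|kb| <= CH * `|x - y| := HCH _ _ (Tg b hb).
  have B1b : C2 * `|kc| * `|kb| <= C2 * (CH * `|x - y|) * (CH * `|x - y|).
    apply: ler_pM => //; first by apply: mulr_ge0.
    by apply: ler_wpM2l.
  have B1 : `|'D_1 G c| <= C2 * (CH * `|x - y|) * (CH * `|x - y|).
    rewrite DG; exact: le_trans B1a B1b.
  have B2 : `|'D_((0, ka - kb) : (V1 * V2)%type) Fp (P a)| <=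
      C1 * (`|L1| * ((b - a) * `|x - y|) * `|x - y|).
    apply: le_trans (HC1 _ _ (PK a ha)) _.
    rewrite pairn; apply: ler_wpM2l => //.
    apply: le_trans (HL _ _ _ (Tg a ha) (Tg b hb)) _.
    rewrite line_diff (normZ_ab _ _ _ (ltW ab)).
    apply: ler_wpM2r => //; apply: ler_wpM2r; last exact: ler_norm.
    by apply: mulr_ge0 => //; rewrite subr_ge0 ltW.
  apply: le_trans (fin_ineq _ _ _ _ _ _ _ _ lin Ec _ B1 B2) _.
    by rewrite subr_ge0 ltW.
  rewrite le_eqVlt; apply/orP; left; apply/eqP; rewrite /Lc; ring.
have := conv1d psi _ M0 dpsi hd t t01.
rewrite /psi /P /g /=.
rewrite scale1r subrr scale0r addr0 scale0r add0r subr0 scale1r.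
by [].
Qed.


Lemma core (R : realType) (S MU : nat) (Theta U : set 'rV[R]_S)
  (Wset : set (Cvec R MU)) (F : Cvec R MU -> Cvec R MU -> R)
  (h : 'rV[R]_S -> Cvec R MU) (L1 : R) :
  Theta `<=` U -> C2_on setT (fun p : Cvec R MU * Cvec R MU => F p.1 p.2) ->
  compact Theta -> compact Wset -> convex_set_on Theta ->
  C2_on U h ->
  (forall th1 th2 v, Theta th1 -> Theta th2 ->
     `|'D_v h th1 - 'D_v h th2| <= L1 * `|th1 - th2| * `|v|) ->
  exists rho : R, 0 < rho /\ weakly_convex_on Theta rho (fun th => maxF F Wset (h th)).
Proof.
move=> ThU [[dF cF] hF2] cTh cW cvx [[dH cH] _] HL.
pose Fp := fun p : (Cvec R MU * Cvec R MU)%type => F p.1 p.2.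
have dF' : forall p, differentiable Fp p := fun p => dF p I.
have ddF : forall v p, differentiable ('D_v Fp) p := fun v p => (hF2 v).1 p I.
have cdd : forall u v p, {for p, continuous ('D_u ('D_v Fp))} :=
  fun u v p => (hF2 v).2 u p I.
have [IV [eV [cV frV]]] : has_frame (Cvec R MU * Cvec R MU)%type.
  by apply: has_frame_prod; apply: has_frame_prod; apply: has_frame_rV.
have [IS [eS [cS frS]]] := has_frame_rV R S.
have cHT : compact (h @` Theta).
  apply: continuous_compact => //; apply: continuous_in_subspaceT => q.
  rewrite inE => Tq; exact: differentiable_continuous (dH q (ThU q Tq)).
pose K := Wset `*` (h @` Theta).
have cK : compact K by exact: compact_setX.
have [C0 [C00 HC0]] := compact_ub K (fun p => `|Fp p|) cK
  (fun p _ => continuous_comp (differentiable_continuous (dF' p)) (@norm_continuous _ _ _)).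
have [C1 [C10 HC1]] := deriv_bound eV cV K Fp frV cK (fun q _ => dF' q)
  (fun i q _ => cF (eV i) q I).
have [C2 [C20 HC2]] := deriv2_bound eV cV K Fp frV cK dF' ddF
  (fun i j q _ => cdd (eV j) (eV i) q).
have [CH [CH0 HCH]] := deriv_bound eS cS Theta h frS cTh
  (fun q Tq => dH q (ThU q Tq)) (fun i q Tq => cH (eS i) q (ThU q Tq)).
pose Lc := C2 * CH ^+ 2 + C1 * `|L1|.
have Lc0 : 0 <= Lc.
  by apply: addr_ge0; apply: mulr_ge0 => //; apply: exprn_ge0.
have pairn : forall z : Cvec R MU, `|((0, z) : (Cvec R MU * Cvec R MU)%type)| = `|z|.
  by move=> z; rewrite prod_normE /= normr0; apply: max_r.
have key : forall W x y t, Wset W -> Theta x -> Theta y -> 0 <= t <= 1 ->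
    F W (h (t *: x + (1 - t) *: y)) <=
    t * F W (h x) + (1 - t) * F W (h y) + (Lc * `|x - y| ^+ 2) * (t * (1 - t)).
  move=> W x y t WW Tx Ty t01.
  have KW : forall th, Theta th -> K ((W, h th) : (Cvec R MU * Cvec R MU)%type).
    by move=> th Tth; split => //; exists th.
  exact: (key_gen R _ _ S Theta Fp h K C1 C2 CH L1 W dF' ddF
    (fun q Tq => dH q (ThU q Tq)) cvx C10 C20 CH0 HC1 HC2 HCH HL KW x y t Tx Ty t01).
exists (2 * Lc + 1); split.
  by rewrite -[0]addr0; apply: ler_ltD => //; apply: mulr_ge0.
move=> x y t Tx Ty t01 /=.
rewrite /maxF.
have ub : forall z, Theta z -> has_ubound [set F W (h z) | W in Wset].
  move=> z Tz; exists C0 => _ [W WW <-].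
  apply: le_trans (ler_norm _) _.
  have KW : K ((W, h z) : (Cvec R MU * Cvec R MU)%type) by split => //; exists z.
  exact: (HC0 _ KW).
have tt : 0 <= t * (1 - t).
  by case/andP: t01 => t0 t1; apply: mulr_ge0 => //; rewrite subr_ge0.
have c0 : 0 <= Lc * `|x - y| ^+ 2 * (t * (1 - t)).
  by apply: mulr_ge0 => //; apply: mulr_ge0 => //; apply: exprn_ge0.
have hm := sup_comb Wset (fun W => F W (h (t *: x + (1 - t) *: y)))
  (fun W => F W (h x)) (fun W => F W (h y)) t _ t01 c0 (ub x Tx) (ub y Ty)
  (fun W WW => key W x y t WW Tx Ty t01).
exact: (final_comb _ _ _ _ _ _ _ _ _ _ t01 hm (sq_conv x y t)
  (exprn_ge0 _ (normr_ge0 _)) (norm_sq_le (x - y)) Lc0).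
Qed.

Theorem lemma3
  (R : realType)
  (dX : measure_display) (Xi : measurableType dX) (P : probability Xi R)
  (d : measure_display) (Omega : measurableType d)
  (omega : Xi -> Omega)
  (S MU : nat)
  (Theta : set 'rV[R]_S) (Wset : set (Cvec R MU))
  (F : Cvec R MU -> Cvec R MU -> R)
  (U : set 'rV[R]_S)
  (H : 'rV[R]_S -> Omega -> Cvec R MU)
  (* standing setting *)
  (HPcomplete : measure_is_complete P)
  (Homega : measurable_fun setT omega)
  (HS : (0 < S)%N) (HMU : (0 < MU)%N)
  (HUopen : open U) (HThetaU : Theta `<=` U)
  (* (A1) *)
  (A1 : C2_on setT (fun p : Cvec R MU * Cvec R MU => F p.1 p.2))
  (* (A2) *)
  (A2a : compact Theta) (A2b : compact Wset) (A2c : convex_set_on Theta)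
  (* (A3) *)
  (A3 : exists B_H L_H0 L_H1 : R,
      {ae P, forall xi : Xi,
        (forall th, Theta th -> `|H th (omega xi)| <= B_H) /\
        C2_on U (fun th => H th (omega xi)) /\
        (forall th1 th2, Theta th1 -> Theta th2 ->
           `|H th1 (omega xi) - H th2 (omega xi)| <= L_H0 * `|th1 - th2|) /\
        (forall th1 th2 v, Theta th1 -> Theta th2 ->
           `|'D_v (fun th => H th (omega xi)) th1
             - 'D_v (fun th => H th (omega xi)) th2|
             <= L_H1 * `|th1 - th2| * `|v|)})
  (* (A4) *)
  (A4 : exists rho_t : Omega -> R,
      (forall o, 0 < rho_t o) /\ Zmoment P omega 1 rho_t /\
      {ae P, forall xi : Xi,
        weakly_concave_on Theta (rho_t (omega xi))
          (fun th => maxF F Wset (H th (omega xi)))})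
  (* (A5) *)
  (A5 : forall th, Theta th ->
      forall Wstar : Omega -> Cvec R MU,
        (forall o, Wset (Wstar o) /\
           (forall W, Wset W -> F W (H th o) <= F (Wstar o) (H th o))) ->
        Zmoment P omega 2 (fun o => F (Wstar o) (H th o)) /\
        (exists lb : R, forall o, lb <= F (Wstar o) (H th o))) :
  {ae P, forall xi : Xi, exists rho_h : R, 0 < rho_h /\
      weakly_convex_on Theta rho_h (fun th => maxF F Wset (H th (omega xi)))}.
Proof.
case: A3 => BH [L0 [L1 HA3]].
apply: filterS HA3 => xi [_ [HC2 [_ HL]]].
exact: (@core _ _ _ _ _ _ _ _ L1 HThetaU A1 A2a A2b A2c HC2 HL).
Qed.
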